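(* Let $\mathrm{SL}(2,\mathbb C)$ act on $\mathfrak{sl}(3,\mathbb C)$ by $g\cdot M=\iota(g)M\iota(g)^{-1}$, where $\iota(g)=\begin{pmatrix} g&0\\0&1\end{pmatrix}$, and on $\mathbb C[\mathfrak{sl}(3)]$ by $(g\cdot f)(M)=f(g^{-1}\cdot M)$. Define $$\mathcal I_1=h_0,\quad \mathcal I_2=h_1^2+4x_1y_1,\quad \mathcal I_3=x_2y_2+x_3y_3,$$ $$\mathcal I_4=h_1y_2y_3+y_1y_2^2-x_1y_3^2,\quad \mathcal I_5=h_1x_2x_3+x_1x_2^2-x_3^2y_1,$$ $$\mathcal I_6=h_1(x_2y_2-x_3y_3)-2(y_1y_2x_3+x_1x_2y_3).$$ Then each $\mathcal I_i$ is $\mathrm{SL}(2)$-invariant, and $\mathcal I_1,\dots,\mathcal I_6$ generate the invariant ring: $\mathbb C[\mathfrak{sl}(3)]^{\mathrm{SL}(2)}=\mathbb C[\mathcal I_1,\dots,\mathcal I_6]$.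
   Context: For $M=(m_{ij})\in\mathfrak{sl}(3,\mathbb C)$ (traceless $3\times 3$ complex matrices) define the linear coordinate functions $x_1=m_{12}$, $y_1=m_{21}$, $x_2=m_{23}$, $y_2=m_{32}$, $x_3=m_{13}$, $y_3=m_{31}$, $h_1=m_{11}-m_{22}$, and $h_0=\tfrac12(m_{11}+m_{22})-m_{33}$. These eight functions form a basis of the dual space of $\mathfrak{sl}(3,\mathbb C)$, so $\mathbb C[\mathfrak{sl}(3)]$ is the polynomial ring in them. *)

(* Defs.v *)
From HB Require Import structures.
From mathcomp Require Import all_boot all_order all_algebra.
Set Implicit Arguments. Unset Strict Implicit. Unset Printing Implicit Defensive.
Import Order.TTheory GRing.Theory.
Local Open Scope ring_scope.

Inductive pexpr (R : Type) (n : nat) : Type :=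
| PVar : 'I_n -> pexpr R n
| PC : R -> pexpr R n
| PAdd : pexpr R n -> pexpr R n -> pexpr R n
| PMul : pexpr R n -> pexpr R n -> pexpr R n.
Arguments PVar {R n}.
Arguments PC {R n}.
Arguments PAdd {R n}.
Arguments PMul {R n}.

Fixpoint peval (R : pzRingType) (n : nat) (env : 'I_n -> R) (p : pexpr R n) : R :=
  match p with
  | PVar i => env i
  | PC c => c
  | PAdd p q => peval env p + peval env q
  | PMul p q => peval env p * peval env q
  end.

Section SL3.
Variable F : fieldType.

Definition i3 (k : nat) : 'I_3 := inord k.

Definition in_sl3 (M : 'M[F]_3) : Prop := \tr M = 0.

(* Coordinates, indexed 0..7 as x1,y1,x2,y2,x3,y3,h1,h0 *)
Definition coords (M : 'M[F]_3) (k : 'I_8) : F :=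
  nth 0 [:: M (i3 0) (i3 1); M (i3 1) (i3 0);
           M (i3 1) (i3 2); M (i3 2) (i3 1);
           M (i3 0) (i3 2); M (i3 2) (i3 0);
           M (i3 0) (i3 0) - M (i3 1) (i3 1);
           (M (i3 0) (i3 0) + M (i3 1) (i3 1)) / 2%:R - M (i3 2) (i3 2)] k.

Definition iota (g : 'M[F]_2) : 'M[F]_3 :=
  \matrix_(i < 3, j < 3)
    if (i < 2)%N && (j < 2)%N then g (inord i) (inord j)
    else (i == j)%:R.

Definition in_SL2 (g : 'M[F]_2) : Prop := \det g = 1.

Definition act (g : 'M[F]_2) (M : 'M[F]_3) : 'M[F]_3 :=
  iota g *m M *m invmx (iota g).

(* Elements of C[sl(3)] are represented by polynomial expressions in the 8
   coordinate functions, viewed as functions on sl(3).  (g.f)(M) = f(g^-1 . M). *)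
Definition sl2_invariant (f : pexpr F 8) : Prop :=
  forall g : 'M[F]_2, in_SL2 g -> forall M : 'M[F]_3, in_sl3 M ->
    peval (coords M) f = peval (coords (act (invmx g) M)) f.

Definition X (k : nat) : pexpr F 8 := PVar (inord k).
Local Notation "p '+e' q" := (PAdd p q) (at level 50, left associativity).
Local Notation "p '*e' q" := (PMul p q) (at level 40, left associativity).
Local Notation "c %:C" := (PC c) (at level 2).

Definition x1 := X 0. Definition y1 := X 1. Definition x2 := X 2.
Definition y2 := X 3. Definition x3 := X 4. Definition y3 := X 5.
Definition h1 := X 6. Definition h0 := X 7.

Definition I1 : pexpr F 8 := h0.
Definition I2 : pexpr F 8 := h1 *e h1 +e (4%:R)%:C *e x1 *e y1.
Definition I3 : pexpr F 8 := x2 *e y2 +e x3 *e y3.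
Definition I4 : pexpr F 8 :=
  h1 *e y2 *e y3 +e y1 *e y2 *e y2 +e (-1)%:C *e x1 *e y3 *e y3.
Definition I5 : pexpr F 8 :=
  h1 *e x2 *e x3 +e x1 *e x2 *e x2 +e (-1)%:C *e x3 *e x3 *e y1.
Definition I6 : pexpr F 8 :=
  h1 *e (x2 *e y2 +e (-1)%:C *e x3 *e y3)
  +e (-(2%:R))%:C *e (y1 *e y2 *e x3 +e x1 *e x2 *e y3).

Definition Inv (i : 'I_6) : pexpr F 8 :=
  nth I1 [:: I1; I2; I3; I4; I5; I6] i.

End SL3.

(* Main.v *)
Require Import Defs.
From HB Require Import structures.
From mathcomp Require Import all_boot all_order all_algebra.
From mathcomp Require Import ring.
Import GRing.Theory.
Set Implicit Arguments. Unset Strict Implicit. Unset Printing Implicit Defensive.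
Local Open Scope ring_scope.
Section Tools.
Variable F : fieldType.
Hypothesis charF : [pchar F] =i pred0.

Fixpoint psubst {n m} (p : pexpr F n) (s : 'I_n -> pexpr F m) : pexpr F m :=
  match p with
  | PVar i => s i | PC c => PC c
  | PAdd p q => PAdd (psubst p s) (psubst q s)
  | PMul p q => PMul (psubst p s) (psubst q s) end.

Lemma peval_subst n m (p : pexpr F n) s (e : 'I_m -> F) :
  peval e (psubst p s) = peval (fun i => peval e (s i)) p.
Proof. by elim: p => //= p IHp q IHq; rewrite IHp IHq. Qed.

Lemma peval_ext n (e1 e2 : 'I_n -> F) p : (forall i, e1 i = e2 i) -> peval e1 p = peval e2 p.
Proof. by move=> H; elim: p => [i|c|p IHp q IHq|p IHp q IHq] /=; rewrite ?H ?IHp ?IHq. Qed.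

Definition upd {n} (e : 'I_n -> F) k v := fun i => if i == k then v else e i.
Definition updv {n} k (c : pexpr F n) : 'I_n -> pexpr F n :=
  fun i => if i == k then c else PVar i.

Lemma dq n (p : pexpr F n) k c : exists D, forall e,
  peval e p - peval e (psubst p (updv k c)) = (e k - peval e c) * peval e D.
Proof.
elim: p => [i|a|p [D1 H1] q [D2 H2]|p [D1 H1] q [D2 H2]].
- rewrite /updv /=; case: eqP => [->|_].
  + by exists (PC 1) => e /=; rewrite mulr1.
  + by exists (PC 0) => e /=; rewrite subrr mulr0.
- by exists (PC 0) => e /=; rewrite subrr mulr0.
- exists (PAdd D1 D2) => e /=; rewrite mulrDr -H1 -H2; ring.
- exists (PAdd (PMul D1 q) (PMul (psubst p (updv k c)) D2)) => e /=.
  rewrite mulrDr mulrA -H1 mulrCA -H2; ring.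
Qed.

Lemma parity n (p : pexpr F n) k : exists E O, forall e,
  peval e p = peval (upd e k (e k ^+ 2)) E + e k * peval (upd e k (e k ^+ 2)) O.
Proof.
elim: p => [i|a|p [E1 [O1 H1]] q [E2 [O2 H2]]|p [E1 [O1 H1]] q [E2 [O2 H2]]].
- case: (eqVneq i k) => [->|ne].
  + by exists (PC 0), (PC 1) => e /=; rewrite add0r mulr1.
  + exists (PVar i), (PC 0) => e /=; rewrite mulr0 addr0 /upd.
    by rewrite (negbTE ne).
- by exists (PC a), (PC 0) => e /=; rewrite mulr0 addr0.
- exists (PAdd E1 E2), (PAdd O1 O2) => e /=; rewrite H1 H2; ring.
- exists (PAdd (PMul E1 E2) (PMul (PVar k) (PMul O1 O2))), (PAdd (PMul E1 O2) (PMul O1 E2)).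
  move=> e /=; rewrite H1 H2 /upd eqxx; ring.
Qed.

Fixpoint pexp {n} (p : pexpr F n) d : pexpr F n :=
  if d is d'.+1 then PMul p (pexp p d') else PC 1.

Lemma peval_pexp n (p : pexpr F n) d e : peval e (pexp p d) = peval e p ^+ d.
Proof. by elim: d => //= d ->; rewrite exprS. Qed.

Lemma natf_inj : injective (fun n : nat => n%:R : F).
Proof.
move=> i j /= eqij; wlog le: i j eqij / (i <= j)%N.
  by move=> W; case: (leqP i j) => h; [|symmetry]; apply: W => //; exact: ltnW.
have h : ((j - i)%:R : F) = 0.
  by rewrite natrB // eqij subrr.
move/eqP: h; rewrite ((pcharf0P _).1 charF) subn_eq0 => h.
by apply/eqP; rewrite eqn_leq le h.
Qed.

Section Dens.
Variables (n : nat) (k : 'I_n) (e : 'I_n -> F).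
Fixpoint topoly (p : pexpr F n) : {poly F} :=
  match p with
  | PVar i => if i == k then 'X else (e i)%:P
  | PC c => c%:P
  | PAdd p q => topoly p + topoly q
  | PMul p q => topoly p * topoly q end.

Lemma topolyE p t : (topoly p).[t] = peval (upd e k t) p.
Proof.
elim: p => [i|c|p IHp q IHq|p IHp q IHq] /=; rewrite ?hornerE ?IHp ?IHq //.
by rewrite /upd; case: eqP; rewrite ?hornerE.
Qed.

Lemma dens1 (p : pexpr F n) t0 :
  (forall t, t != t0 -> peval (upd e k t) p = 0) -> forall t, peval (upd e k t) p = 0.
Proof.
move=> H t; rewrite -topolyE.
suff -> : topoly p = 0 by rewrite horner0.
apply: (@roots_geq_poly_eq0 _ _ [seq t0 + (i.+1)%:R | i <- iota 0 (size (topoly p))]).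
- apply/allP => x /mapP [i _ ->]; apply/rootP; rewrite topolyE H //.
  by rewrite -subr_eq0 addrC addKr ((pcharf0P _).1 charF).
- by rewrite map_inj_uniq ?iota_uniq // => i j /addrI /natf_inj [].
- by rewrite seq.size_map size_iota.
Qed.
End Dens.
End Tools.
Section Mat.
Variable F : fieldType.

Definition mk3 (a00 a01 a02 a10 a11 a12 a20 a21 a22 : F) : 'M[F]_3 :=
  \matrix_(i, j) nth 0 (nth [::] [:: [:: a00; a01; a02]; [:: a10; a11; a12];
                                   [:: a20; a21; a22]] i) j.
Definition mk2 (a b c d : F) : 'M[F]_2 :=
  \matrix_(i, j) nth 0 (nth [::] [:: [:: a; b]; [:: c; d]] i) j.

Lemma mk3E (M : 'M[F]_3) : M = mk3 (M (i3 0) (i3 0)) (M (i3 0) (i3 1)) (M (i3 0) (i3 2))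
  (M (i3 1) (i3 0)) (M (i3 1) (i3 1)) (M (i3 1) (i3 2))
  (M (i3 2) (i3 0)) (M (i3 2) (i3 1)) (M (i3 2) (i3 2)).
Proof.
apply/matrixP => i j; rewrite mxE.
case: i => [[|[|[|//]]] Hi]; case: j => [[|[|[|//]]] Hj] /=;
  by congr (M _ _); apply/val_inj; rewrite /= /i3 inordK.
Qed.

Lemma mk2E (M : 'M[F]_2) : M = mk2 (M (inord 0) (inord 0)) (M (inord 0) (inord 1))
  (M (inord 1) (inord 0)) (M (inord 1) (inord 1)).
Proof.
apply/matrixP => i j; rewrite mxE.
case: i => [[|[|//]] Hi]; case: j => [[|[|//]] Hj] /=;
  by congr (M _ _); apply/val_inj; rewrite /= inordK.
Qed.

Lemma mk3_mul a00 a01 a02 a10 a11 a12 a20 a21 a22 b00 b01 b02 b10 b11 b12 b20 b21 b22 :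
  mk3 a00 a01 a02 a10 a11 a12 a20 a21 a22 *m mk3 b00 b01 b02 b10 b11 b12 b20 b21 b22 =
  mk3 (a00*b00 + a01*b10 + a02*b20) (a00*b01 + a01*b11 + a02*b21) (a00*b02 + a01*b12 + a02*b22)
      (a10*b00 + a11*b10 + a12*b20) (a10*b01 + a11*b11 + a12*b21) (a10*b02 + a11*b12 + a12*b22)
      (a20*b00 + a21*b10 + a22*b20) (a20*b01 + a21*b11 + a22*b21) (a20*b02 + a21*b12 + a22*b22).
Proof.
apply/matrixP => i j; rewrite !mxE !big_ord_recr big_ord0 /= !mxE /= add0r.
by case: i => [[|[|[|//]]] Hi]; case: j => [[|[|[|//]]] Hj].
Qed.

Lemma mk2_mul a b c d a' b' c' d' :
  mk2 a b c d *m mk2 a' b' c' d' = mk2 (a*a' + b*c') (a*b' + b*d') (c*a' + d*c') (c*b' + d*d').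
Proof.
apply/matrixP => i j; rewrite !mxE !big_ord_recr big_ord0 /= !mxE /= add0r.
by case: i => [[|[|//]] Hi]; case: j => [[|[|//]] Hj].
Qed.

Lemma mk3_1 : 1%:M = mk3 1 0 0 0 1 0 0 0 1.
Proof.
apply/matrixP => i j; rewrite !mxE.
by case: i => [[|[|[|//]]] Hi]; case: j => [[|[|[|//]]] Hj].
Qed.

Lemma mk2_1 : 1%:M = mk2 1 0 0 1.
Proof.
apply/matrixP => i j; rewrite !mxE.
by case: i => [[|[|//]] Hi]; case: j => [[|[|//]] Hj].
Qed.

Lemma iota_mk2 a b c d : Defs.iota (mk2 a b c d) = mk3 a b 0 c d 0 0 0 1.
Proof.
apply/matrixP => i j; rewrite !mxE.
case: i => [[|[|[|//]]] Hi]; case: j => [[|[|[|//]]] Hj]; by rewrite /= ?mxE ?inordK.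
Qed.

Lemma det_mk2 a b c d : \det (mk2 a b c d) = a * d - b * c.
Proof.
rewrite (expand_det_row _ 0) !big_ord_recr big_ord0 /= /cofactor !det_mx11 !mxE /=.
rewrite add0r; ring.
Qed.

Lemma coords_mk3 a00 a01 a02 a10 a11 a12 a20 a21 a22 k :
  coords (mk3 a00 a01 a02 a10 a11 a12 a20 a21 a22) k =
  nth 0 [:: a01; a10; a12; a21; a02; a20; a00 - a11; (a00 + a11) / 2%:R - a22] k.
Proof. by rewrite /coords /i3 !mxE !inordK. Qed.

Lemma invmx_eq n (A B : 'M[F]_n.+1) : A *m B = 1%:M -> invmx A = B.
Proof.
move=> AB; have [Au _] := mulmx1_unit AB.
by rewrite -[RHS](mulKmx Au) AB mulmx1.
Qed.

Lemma invmx_mk2 a b c d : a * d - b * c = 1 -> invmx (mk2 a b c d) = mk2 d (-b) (-c) a.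
Proof.
move=> H; apply: invmx_eq; rewrite mk2_mul mk2_1.
congr mk2; (ring || (rewrite -[RHS]H; ring)).
Qed.

Lemma invmx_iota a b c d : a * d - b * c = 1 ->
  invmx (Defs.iota (mk2 a b c d)) = Defs.iota (mk2 d (-b) (-c) a).
Proof.
move=> H; apply: invmx_eq; rewrite !iota_mk2 mk3_mul mk3_1.
congr mk3; (ring || (rewrite -[RHS]H; ring)).
Qed.
End Mat.
Section Inv.
Variable F : fieldType.

Lemma act_mk2 a b c d (M : 'M[F]_3) : a*d - b*c = 1 ->
  act (mk2 a b c d) M = mk3 a b 0 c d 0 0 0 1 *m M *m mk3 d (-b) 0 (-c) a 0 0 0 1.
Proof. by move=> H; rewrite /act invmx_iota // !iota_mk2. Qed.

Lemma det_trick (x L R : F) k : x = 1 -> R = x ^+ k * L -> L = R.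
Proof. by move=> -> ->; rewrite expr1n mul1r. Qed.

Lemma det_trick1 (x L R y : F) : x = 1 -> R = L + (x - 1) * y -> L = R.
Proof. by move=> -> ->; rewrite subrr mul0r addr0. Qed.

Lemma inv_act (g : 'M[F]_2) (M : 'M[F]_3) i : in_SL2 g -> in_sl3 M ->
  peval (coords M) (Inv F i) = peval (coords (act (invmx g) M)) (Inv F i).
Proof.
rewrite /in_SL2 /in_sl3 (mk2E g) det_mk2 => Hg HM.
rewrite invmx_mk2 // act_mk2; last by rewrite -Hg; ring.
move: HM; rewrite (mk3E M) !mk3_mul /mxtrace !big_ord_recr big_ord0 /= !mxE /=.
move: (M (i3 0) (i3 0)) (M (i3 0) (i3 1)) (M (i3 0) (i3 2))
  (M (i3 1) (i3 0)) (M (i3 1) (i3 1)) (M (i3 1) (i3 2))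
  (M (i3 2) (i3 0)) (M (i3 2) (i3 1)) (M (i3 2) (i3 2)) => m00 m01 m02 m10 m11 m12 m20 m21 m22.
move: (g (inord 0) (inord 0)) (g (inord 0) (inord 1)) (g (inord 1) (inord 0)) (g (inord 1) (inord 1)) Hg => a b c d Hg.
rewrite add0r => HM.
have -> : m22 = - (m00 + m11) by rewrite -[LHS]subr0 -HM; ring.
case: i => [[|[|[|[|[|[|//]]]]]] Hi]; rewrite /Inv /= /I1 /I2 /I3 /I4 /I5 /I6 /X /=;
  rewrite !coords_mk3 !inordK //=.
- apply: (det_trick1 (y:=(m00 + m11) / 2%:R) Hg); ring.
- first [ by apply: (det_trick (k:=1) Hg); ring | by apply: (det_trick (k:=2) Hg); ring | by apply: (det_trick (k:=3) Hg); ring | by apply: (det_trick (k:=4) Hg); ring | by apply: (det_trick (k:=0) Hg); ring].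
- first [ by apply: (det_trick (k:=1) Hg); ring | by apply: (det_trick (k:=2) Hg); ring | by apply: (det_trick (k:=3) Hg); ring | by apply: (det_trick (k:=4) Hg); ring | by apply: (det_trick (k:=0) Hg); ring].
- first [ by apply: (det_trick (k:=1) Hg); ring | by apply: (det_trick (k:=2) Hg); ring | by apply: (det_trick (k:=3) Hg); ring | by apply: (det_trick (k:=4) Hg); ring | by apply: (det_trick (k:=0) Hg); ring].
- first [ by apply: (det_trick (k:=1) Hg); ring | by apply: (det_trick (k:=2) Hg); ring | by apply: (det_trick (k:=3) Hg); ring | by apply: (det_trick (k:=4) Hg); ring | by apply: (det_trick (k:=0) Hg); ring].
- first [ by apply: (det_trick (k:=1) Hg); ring | by apply: (det_trick (k:=2) Hg); ring | by apply: (det_trick (k:=3) Hg); ring | by apply: (det_trick (k:=4) Hg); ring | by apply: (det_trick (k:=0) Hg); ring].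
Qed.
End Inv.
Section Z.
Variable F : fieldType.
Hypothesis charF : [pchar F] =i pred0.

Lemma natf_neq0 n : (n.+1%:R : F) != 0.
Proof. by rewrite ((pcharf0P _).1 charF). Qed.

Definition J (z : 'I_8 -> F) : 'I_6 -> F := fun i => peval z (Inv F i).
Definition zk (z : 'I_8 -> F) k := z (inord k).

Lemma zE (z : 'I_8 -> F) (k : 'I_8) : z k = zk z k.
Proof. by rewrite /zk; congr z; apply/val_inj; rewrite /= inordK. Qed.

Lemma JE z (i : 'I_6) : J z i = nth 0
  [:: zk z 7; zk z 6 * zk z 6 + 4%:R * zk z 0 * zk z 1;
      zk z 2 * zk z 3 + zk z 4 * zk z 5;
      zk z 6 * zk z 3 * zk z 5 + zk z 1 * zk z 3 * zk z 3 + (-1) * zk z 0 * zk z 5 * zk z 5;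
      zk z 6 * zk z 2 * zk z 4 + zk z 0 * zk z 2 * zk z 2 + (-1) * zk z 4 * zk z 4 * zk z 1;
      zk z 6 * (zk z 2 * zk z 3 + (-1) * zk z 4 * zk z 5)
        + (- 2%:R) * (zk z 1 * zk z 3 * zk z 4 + zk z 0 * zk z 2 * zk z 5)] i.
Proof. by case: i => [[|[|[|[|[|[|//]]]]]] Hi]. Qed.

Lemma Jk z k : (k < 6)%N -> J z (inord k) = nth 0
  [:: zk z 7; zk z 6 * zk z 6 + 4%:R * zk z 0 * zk z 1;
      zk z 2 * zk z 3 + zk z 4 * zk z 5;
      zk z 6 * zk z 3 * zk z 5 + zk z 1 * zk z 3 * zk z 3 + (-1) * zk z 0 * zk z 5 * zk z 5;
      zk z 6 * zk z 2 * zk z 4 + zk z 0 * zk z 2 * zk z 2 + (-1) * zk z 4 * zk z 4 * zk z 1;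
      zk z 6 * (zk z 2 * zk z 3 + (-1) * zk z 4 * zk z 5)
        + (- 2%:R) * (zk z 1 * zk z 3 * zk z 4 + zk z 0 * zk z 2 * zk z 5)] k.
Proof. by move=> Hk; rewrite JE inordK. Qed.

Lemma rel z : J z (inord 5) ^+ 2 + 4%:R * J z (inord 3) * J z (inord 4)
   = J z (inord 1) * J z (inord 2) ^+ 2.
Proof. rewrite !Jk //=; ring. Qed.

End Z.
Section Slice.
Variable F : fieldType.
Hypothesis charF : [pchar F] =i pred0.

Definition zz (l : seq F) : 'I_8 -> F := fun k => nth 0 l k.
Definition sv (j : 'I_6 -> F) : 'I_8 -> F :=
  zz [:: -(j (inord 3)) / (j (inord 2)) ^+ 2; - j (inord 4); 0; 0; 1; j (inord 2);
         - j (inord 5) / j (inord 2); j (inord 0)].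

Lemma slice_eq (f : pexpr F 8) : sl2_invariant f -> forall z, J z (inord 2) != 0 ->
  peval z f = peval (sv (J z)) f.
Proof.
move=> Hf z Hs.
have n2 := natf_neq0 charF 1; have n3 := natf_neq0 charF 2.
pose M := mk3 ((2%:R / 3%:R * zk z 7 + zk z 6) / 2%:R) (zk z 0) (zk z 4)
              (zk z 1) ((2%:R / 3%:R * zk z 7 - zk z 6) / 2%:R) (zk z 2)
              (zk z 5) (zk z 3) (- (2%:R / 3%:R * zk z 7)).
have cM : forall k, coords M k = z k.
  move=> k; rewrite coords_mk3 zE; case: k => [[|[|[|[|[|[|[|[|//]]]]]]]] Hk] //=; field; rewrite ?n2 ?n3 ?Hs //.
have HM : in_sl3 M.
  rewrite /in_sl3 /mxtrace !big_ord_recr big_ord0 /= !mxE /=; field; rewrite ?n2 ?n3 ?Hs //.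
move: Hs; rewrite Jk //= => Hs.
pose s := zk z 2 * zk z 3 + zk z 4 * zk z 5.
pose h := mk2 (zk z 5 / s) (zk z 3 / s) (- zk z 2) (zk z 4).
have dh : (zk z 5 / s) * zk z 4 - (zk z 3 / s) * (- zk z 2) = 1 by rewrite /s; field.
have Hg : in_SL2 (invmx h) by rewrite /in_SL2 det_inv det_mk2 dh invr1.
have := Hf _ Hg M HM; rewrite invmxK act_mk2 // !mk3_mul => E.
rewrite -(peval_ext f cM) E; apply: peval_ext => k; rewrite coords_mk3 /sv /zz.
case: k => [[|[|[|[|[|[|[|[|//]]]]]]]] Hk] /=; rewrite ?Jk //= /s; field; rewrite ?n2 ?n3 ?Hs //.
Qed.
End Slice.
Section StepA.
Variable F : fieldType.
Hypothesis charF : [pchar F] =i pred0.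

Definition V k : pexpr F 6 := PVar (inord k).

Lemma scale (f : pexpr F 8) : exists d (G : pexpr F 6), forall j : 'I_6 -> F,
  j (inord 2) != 0 -> peval (sv j) f * j (inord 2) ^+ d = peval j G.
Proof.
elim: f => [k|c|p [d1 [G1 H1]] q [d2 [G2 H2]]|p [d1 [G1 H1]] q [d2 [G2 H2]]].
- exists 2%N; exists (nth (PC 0) [:: PMul (PC (-1)) (V 3);
    PMul (PC (-1)) (PMul (V 4) (PMul (V 2) (V 2))); PC 0; PC 0; PMul (V 2) (V 2);
    PMul (V 2) (PMul (V 2) (V 2)); PMul (PC (-1)) (PMul (V 5) (V 2));
    PMul (V 0) (PMul (V 2) (V 2))] k) => j Hj.
  rewrite /sv /zz; case: k => [[|[|[|[|[|[|[|[|//]]]]]]]] Hk] /=; field; by rewrite ?Hj.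
- by exists 0%N, (PC c) => j _ /=; rewrite expr0 mulr1.
- exists (d1 + d2)%N, (PAdd (PMul G1 (pexp (V 2) d2)) (PMul G2 (pexp (V 2) d1))) => j Hj /=.
  by rewrite !peval_pexp /= -H1 // -H2 // exprD; ring.
- exists (d1 + d2)%N, (PMul G1 G2) => j Hj /=.
  by rewrite -H1 // -H2 // exprD; ring.
Qed.

Lemma inord_eq8 i j : (i < 8)%N -> (j < 8)%N -> (inord i == inord j :> 'I_8) = (i == j).
Proof. by move=> Hi Hj; rewrite -val_eqE /= !inordK. Qed.

Lemma upd_id n (e : 'I_n -> F) k p : peval (upd e k (e k)) p = peval e p.
Proof. by apply: peval_ext => i; rewrite /upd; case: eqP => // ->. Qed.

Lemma dens_I3 (H : pexpr F 8) : (forall z, J z (inord 2) != 0 -> peval z H = 0) ->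
  forall z, peval z H = 0.
Proof.
move=> HH.
have S1 : forall z, zk z 4 != 0 -> peval z H = 0.
  move=> z h4; rewrite -(upd_id z (inord 5)).
  apply: (dens1 charF (t0 := - (zk z 2 * zk z 3) / zk z 4)) => t Ht.
  apply: HH; rewrite Jk //= /zk /upd !inord_eq8 //=.
  apply: contraNneq Ht => E; apply/eqP.
  transitivity (((zk z 2 * zk z 3 + zk z 4 * t) - zk z 2 * zk z 3) / zk z 4).
    by rewrite /zk; field.
  by rewrite /zk E sub0r.
move=> z; rewrite -(upd_id z (inord 4)).
apply: (dens1 charF (t0 := 0)) => t Ht.
by apply: S1; rewrite /zk /upd eqxx.
Qed.

Lemma stepA (f : pexpr F 8) : sl2_invariant f -> exists d (G : pexpr F 6),
  forall z, peval z f * J z (inord 2) ^+ d = peval (J z) G.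
Proof.
move=> Hf; have [d [G HG]] := scale f.
exists d, G => z.
pose H := PAdd (PMul f (pexp (Inv F (inord 2)) d)) (PMul (PC (-1)) (psubst G (Inv F))).
have: peval z H = 0.
  apply: dens_I3 => {}z Hz.
  rewrite /H /= peval_subst peval_pexp -/(J z (inord 2)) slice_eq // HG //.
  rewrite /J; ring.
rewrite /H /= peval_subst peval_pexp -/(J z (inord 2)) => E.
by apply/eqP; rewrite -subr_eq0 -E /J; apply/eqP; ring.
Qed.
End StepA.
Section StepB.
Variable F : closedFieldType.
Hypothesis charF : [pchar F] =i pred0.

Lemma sqrt_ex (a : F) : exists s, s ^+ 2 = a.
Proof.
have /closed_rootP [s /rootP] : size ('X^2 - a%:P : {poly F}) != 1%N by rewrite size_XnsubC.
by rewrite !hornerE => /eqP; rewrite subr_eq0 => /eqP <-; exists s.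
Qed.

Lemma ordE n (e : 'I_n.+1 -> F) (k : 'I_n.+1) : e k = e (inord k).
Proof. by congr e; apply/val_inj; rewrite /= inordK. Qed.

Lemma inord_eq6 i j : (i < 6)%N -> (j < 6)%N -> (inord i == inord j :> 'I_6) = (i == j).
Proof. by move=> Hi Hj; rewrite -val_eqE /= !inordK. Qed.

Lemma surj (e : 'I_6 -> F) : e (inord 4) != 0 -> e (inord 2) = 0 ->
  e (inord 5) ^+ 2 + 4%:R * e (inord 3) * e (inord 4) = 0 ->
  exists z, forall i, J z i = e i.
Proof.
move=> h4 h2 hr.
have n2 := natf_neq0 charF 1; have n4 := natf_neq0 charF 3.
have e3E : e (inord 3) = - (e (inord 5) ^+ 2) / (4%:R * e (inord 4)).
  transitivity ((e (inord 5) ^+ 2 + 4%:R * e (inord 3) * e (inord 4) - e (inord 5) ^+ 2)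
     / (4%:R * e (inord 4))); first by field; rewrite ?n4 ?h4.
  by rewrite hr sub0r.
exists (zz [:: - e (inord 1) / (4%:R * e (inord 4)); - e (inord 4); 0;
   e (inord 5) / (2%:R * e (inord 4)); 1; 0; 0; e (inord 0)]) => i.
rewrite JE (ordE e i) /zk /zz !inordK //.
case: i => [[|[|[|[|[|[|//]]]]]] Hi] /=; rewrite ?e3E ?h2; try (field; by rewrite ?n2 ?n4 ?h4).

Qed.

Lemma dens2 (p : pexpr F 6) : (forall e : 'I_6 -> F, e (inord 3) != 0 -> e (inord 4) != 0 ->
  peval e p = 0) -> forall e, peval e p = 0.
Proof.
move=> H.
have S1 : forall e : 'I_6 -> F, e (inord 3) != 0 -> peval e p = 0.
  move=> e h3; rewrite -(upd_id e (inord 4)).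
  apply: (dens1 charF (t0 := 0)) => t Ht.
  by apply: H; rewrite /upd ?inord_eq6 //= eqxx.
move=> e; rewrite -(upd_id e (inord 3)).
apply: (dens1 charF (t0 := 0)) => t Ht.
by apply: S1; rewrite /upd eqxx.
Qed.

End StepB.
Section Factor.
Variable F : closedFieldType.
Hypothesis charF : [pchar F] =i pred0.

Definition cexp : pexpr F 6 := PMul (PC (- 4%:R)) (PMul (PVar (inord 3)) (PVar (inord 4))).
Definition sub2 : 'I_6 -> pexpr F 6 := fun i =>
  if i == inord 2 then PC 0 else if i == inord 5 then cexp else PVar i.
Definition sub5 : 'I_6 -> pexpr F 6 :=
  updv (inord 5) (PMul (PVar (inord 5)) (PVar (inord 5))).

Lemma E3E p (e : 'I_6 -> F) :
  peval e (psubst (psubst p (updv (inord 5) cexp)) (updv (inord 2) (PC 0))) =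
  peval e (psubst p sub2).
Proof.
rewrite !peval_subst; apply: peval_ext => i; rewrite /updv /sub2.
case: (eqVneq i (inord 5)) => [->|n5] /=.
  by rewrite !inord_eq6.
by case: (i == inord 2).
Qed.

Lemma sub5E D (j : 'I_6 -> F) :
  peval j (psubst D sub5) = peval (upd j (inord 5) (j (inord 5) ^+ 2)) D.
Proof.
rewrite peval_subst; apply: peval_ext => i; rewrite /sub5 /updv /upd.
by case: (i == inord 5); rewrite //= expr2.
Qed.

Lemma VV (P : pexpr F 6) E O :
  (forall z, J z (inord 2) = 0 -> peval (J z) P = 0) ->
  (forall e, peval e P = peval (upd e (inord 5) (e (inord 5) ^+ 2)) E +
     e (inord 5) * peval (upd e (inord 5) (e (inord 5) ^+ 2)) O) ->
  forall e : 'I_6 -> F, e (inord 3) != 0 -> e (inord 4) != 0 ->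
    peval e (psubst E sub2) = 0 /\ peval e (psubst O sub2) = 0.
Proof.
move=> Hv HEO e h3 h4.
have n2 := natf_neq0 charF 1; have n4 := natf_neq0 charF 3.
have [s hs] := sqrt_ex (- 4%:R * e (inord 3) * e (inord 4)).
have s0 : s != 0.
  apply/eqP => s0; move: hs; rewrite s0 expr0n /= => /esym/eqP.
  by rewrite !mulNr oppr_eq0 !mulf_eq0 (negbTE n4) (negbTE h3) (negbTE h4).
have key : forall sg, sg ^+ 2 = s ^+ 2 ->
    0 = peval e (psubst E sub2) + sg * peval e (psubst O sub2).
  move=> sg hsg.
  pose es := upd (upd e (inord 2) 0) (inord 5) sg.
  have es2 : es (inord 2) = 0 by rewrite /es /upd !inord_eq6.
  have [z hz] : exists z, forall i, J z i = es i.
    apply: surj => //; rewrite /es /upd ?inord_eq6 //=.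
    by rewrite hsg hs; ring.
  have P0 : peval es P = 0.
    rewrite -(peval_ext P hz); exact: (Hv z (etrans (hz _) es2)).
  rewrite -P0 HEO; congr (_ + _ * _); try by rewrite /es /upd eqxx.
  1-2: rewrite peval_subst; apply: peval_ext => i; rewrite /es /upd /sub2;
    (case: (eqVneq i (inord 5)) => [->|n5]; [by rewrite !inord_eq6 //= hsg hs; ring|];
     by case: (i == inord 2)).
have k1 := key s erefl; have k2 := key (- s) (sqrrN s).
have hO : peval e (psubst O sub2) = 0.
  have : (2%:R * s) * peval e (psubst O sub2) = 0.
    by rewrite -[RHS](subrr 0) {1}k1 k2; ring.
  by move/eqP; rewrite !mulf_eq0 (negbTE n2) (negbTE s0) /= => /eqP.
by split => //; rewrite [RHS]k1 hO mulr0 addr0.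
Qed.

Lemma factor (P : pexpr F 6) : (forall z, J z (inord 2) = 0 -> peval (J z) P = 0) ->
  exists R, forall z, peval (J z) P = J z (inord 2) * peval (J z) R.
Proof.
move=> Hv.
have [E [O HEO]] := parity P (inord 5).
have VE : forall e, peval e (psubst E sub2) = 0.
  by apply: dens2 => // e h3 h4; case: (VV Hv HEO h3 h4).
have VO : forall e, peval e (psubst O sub2) = 0.
  by apply: dens2 => // e h3 h4; case: (VV Hv HEO h3 h4).
have [D1 HD1] := dq E (inord 5) cexp.
have [D2 HD2] := dq (psubst E (updv (inord 5) cexp)) (inord 2) (PC 0).
have [D1o HD1o] := dq O (inord 5) cexp.
have [D2o HD2o] := dq (psubst O (updv (inord 5) cexp)) (inord 2) (PC 0).
pose V k := @PVar F 6 (inord k).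
exists (PAdd (PAdd (PMul (V 1%N) (PMul (V 2%N) (psubst D1 sub5))) (psubst D2 sub5))
  (PMul (V 5%N) (PAdd (PMul (V 1%N) (PMul (V 2%N) (psubst D1o sub5))) (psubst D2o sub5)))).
move=> z; have hr := rel z; move: (J z) hr => j hr.
rewrite HEO /= !sub5E.
set e5 := upd j (inord 5) (j (inord 5) ^+ 2).
have e5_5 : e5 (inord 5) = j (inord 5) ^+ 2 by rewrite /e5 /upd eqxx.
have e5_2 : e5 (inord 2) = j (inord 2) by rewrite /e5 /upd inord_eq6.
have ce5 : peval e5 cexp = - 4%:R * j (inord 3) * j (inord 4).
  by rewrite /= /e5 /upd !inord_eq6 //=; ring.
have h1 := HD1 e5; have h2 := HD2 e5; have h1o := HD1o e5; have h2o := HD2o e5.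
rewrite E3E VE e5_2 /= in h2; rewrite E3E VO e5_2 /= in h2o.
rewrite e5_5 ce5 in h1 h1o.
rewrite !subr0 in h2 h2o.
have eqE : peval e5 E = j (inord 1) * j (inord 2) ^+ 2 * peval e5 D1 + j (inord 2) * peval e5 D2.
  by rewrite -(subrK (peval e5 (psubst E (updv (inord 5) cexp))) (peval e5 E)) h1 h2 -hr; ring.
have eqO : peval e5 O = j (inord 1) * j (inord 2) ^+ 2 * peval e5 D1o + j (inord 2) * peval e5 D2o.
  by rewrite -(subrK (peval e5 (psubst O (updv (inord 5) cexp))) (peval e5 O)) h1o h2o -hr; ring.
rewrite eqE eqO; ring.
Qed.
End Factor.
Section Main.
Variable F : closedFieldType.
Hypothesis charF : [pchar F] =i pred0.

Lemma descent (f : pexpr F 8) N : forall P : pexpr F 6,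
  (forall z, peval z f * J z (inord 2) ^+ N = peval (J z) P) ->
  exists Q, forall z, peval z f = peval (J z) Q.
Proof.
elim: N => [|N IH] P HP.
  by exists P => z; rewrite -HP expr0 mulr1.
have [R HR] : exists R, forall z, peval (J z) P = J z (inord 2) * peval (J z) R.
  by apply: factor => // z Hz; rewrite -HP Hz expr0n mulr0.
apply: (IH R) => z.
pose H := PAdd (PMul f (pexp (Inv F (inord 2)) N)) (PMul (PC (-1)) (psubst R (Inv F))).
have: peval z H = 0.
  apply: (dens_I3 charF) => {}z Hz.
  rewrite /H /= peval_subst peval_pexp -/(J z (inord 2)).
  have := HP z; rewrite HR exprS => E.
  have : J z (inord 2) * (peval z f * J z (inord 2) ^+ N - peval (J z) R) = 0.
    by rewrite mulrBr -E; ring.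
  move/eqP; rewrite mulf_eq0 (negbTE Hz) /= => /eqP E2.
  by rewrite -[RHS]E2 /J; ring.
rewrite /H /= peval_subst peval_pexp -/(J z (inord 2)) => E.
by apply/eqP; rewrite -subr_eq0 -E /J; apply/eqP; ring.
Qed.

Lemma sl3_act (g : 'M[F]_2) M : in_SL2 g -> in_sl3 M -> in_sl3 (act (invmx g) M).
Proof.
rewrite /in_SL2 (mk2E g) det_mk2 => Hg HM.
rewrite /in_sl3 invmx_mk2 // act_mk2; last by rewrite -Hg; ring.
rewrite -mulmxA mxtrace_mulC -mulmxA mk3_mul.
rewrite (_ : mk3 _ _ _ _ _ _ _ _ _ = 1%:M) ?mulmx1 //.
rewrite mk3_1; congr mk3; (ring || (rewrite -[RHS]Hg; ring)).
Qed.
End Main.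

Theorem mainTheorem4 (F : closedFieldType) (charF : [pchar F] =i pred0) :
  (forall i : 'I_6, sl2_invariant (Inv F i)) /\
  (forall f : pexpr F 8,
     sl2_invariant f <->
     exists P : pexpr F 6, forall M : 'M[F]_3, in_sl3 M ->
       peval (coords M) f = peval (fun i => peval (coords M) (Inv F i)) P).
Proof.
split.
  by move=> i g Hg M HM; apply: inv_act.
move=> f; split.
  move=> Hf; have [d [G HG]] := stepA charF Hf.
  have [Q HQ] := descent charF HG.
  by exists Q => M _; apply: HQ.
case=> P HP g Hg M HM.
rewrite HP // HP; last exact: sl3_act.
by apply: peval_ext => i; apply: inv_act.
Qed.
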